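(* Let $\epsilon_1=\sup\{\psi_0(x,\tfrac1{2000}):\ \tfrac1{2000}<x<\tfrac12\}$ (one has $-\infty<\epsilon_1<0$). If $0<y<x<\tfrac14$ and $\psi_0(x,y)>\epsilon_1$, then $y<\tfrac1{2000}$.
   Context: $\mathbb{T}^2=[-\tfrac12,\tfrac12]^2$ with opposite sides identified. $\mathrm{sgn}(t)=1$ for $t>0$, $-1$ for $t\le0$. $\psi_0=\Delta^{-1}[\mathrm{sgn}(x)\mathrm{sgn}(y)]$, where $\Delta^{-1}$ is the inverse Laplacian on mean-zero functions on $\mathbb{T}^2$ (convolution with the torus Green's function); $\psi_0$ is odd in $x$ and in $y$ and negative on $(0,\tfrac12)^2$. *)

(* Defs.v *)
From Stdlib Require Import Reals ZArith.
From Coquelicot Require Import Coquelicot.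
Open Scope R_scope.

Definition sgn (t : R) : R := if Rlt_dec 0 t then 1 else -1.

(* The right-hand side sgn(x) sgn(y) on the torus [-1/2,1/2]^2. *)
Definition f0 (x y : R) : R := sgn x * sgn y.

Definition phase (m n : Z) (x y : R) : R := 2 * PI * (IZR m * x + IZR n * y).

(* Real Fourier coefficients on the torus [-1/2,1/2]^2:
   ghat(m,n) = a(m,n) - i b(m,n) with
   a = \int\int g cos(phase), b = \int\int g sin(phase). *)
Definition fcos (g : R -> R -> R) (m n : Z) : R :=
  RInt (fun x => RInt (fun y => g x y * cos (phase m n x y)) (-1/2) (1/2)) (-1/2) (1/2).
Definition fsin (g : R -> R -> R) (m n : Z) : R :=
  RInt (fun x => RInt (fun y => g x y * sin (phase m n x y)) (-1/2) (1/2)) (-1/2) (1/2).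

(* Term (m,n) of Delta^{-1} g: the mode ghat(m,n) e^{i phase} (real part,
   summed over all of Z^2) divided by the eigenvalue -4 pi^2 (m^2+n^2);
   the zero mode is dropped (inverse Laplacian on mean-zero functions). *)
Definition invlap_term (g : R -> R -> R) (m n : Z) (x y : R) : R :=
  if (Z.eqb m 0 && Z.eqb n 0)%bool then 0
  else - (fcos g m n * cos (phase m n x y) + fsin g m n * sin (phase m n x y))
         / (4 * PI ^ 2 * (IZR m ^ 2 + IZR n ^ 2)).

(* Square partial sums over |m|,|n| <= N. *)
Definition invlap_partial (g : R -> R -> R) (N : nat) (x y : R) : R :=
  sum_f_R0 (fun i =>
    sum_f_R0 (fun j =>
      invlap_term g (Z.of_nat i - Z.of_nat N)%Z (Z.of_nat j - Z.of_nat N)%Z x y)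
    (2 * N)) (2 * N).

Definition invlap (g : R -> R -> R) (x y : R) : R :=
  real (Lim_seq (fun N => invlap_partial g N x y)).

Definition psi0 (x y : R) : R := invlap f0 x y.

Definition eps1 : Rbar :=
  Lub_Rbar (fun v => exists x, 1/2000 < x < 1/2 /\ v = psi0 x (1/2000)).

(* Main.v *)
Require Import Defs.
From Stdlib Require Import Reals Lra Lia Ranalysis5 ZArith.
From Coquelicot Require Import Coquelicot.
Open Scope R_scope.


Ltac toR := match goal with |- ?a = ?b => change (@eq R a b) end.
Ltac fld := field; repeat split; apply Rgt_not_eq; lra.

Lemma is_series_lim (a : nat -> R) (l : R) : is_series a l <-> is_lim_seq (sum_n a) l.
Proof. split; intro H; exact H. Qed.

Lemma sum_n_S (a : nat -> R) n : sum_n a (S n) = sum_n a n + a (S n).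
Proof. now rewrite sum_Sn. Qed.
Lemma sum_n_0 (a : nat -> R) : sum_n a 0 = a 0%nat.
Proof. now rewrite sum_O. Qed.

Definition Mser (k : nat) : R := 2 / ((INR k + 1) * (INR k + 2)).

Lemma Mser_sum (N : nat) : sum_n Mser N = 2 - 2 / (INR N + 2).
Proof.
  unfold Mser. induction N; toR.
  - rewrite sum_n_0. simpl. fld.
  - rewrite sum_n_S, IHN. rewrite S_INR.
    pose proof (pos_INR N). fld.
Qed.

Lemma Mser_is : is_series Mser 2.
Proof.
  apply is_series_lim.
  apply is_lim_seq_ext with (u := fun N => 2 - 2 / (INR N + 2)).
  { intro; now rewrite Mser_sum. }
  replace 2 with (2 - 0) at 1 by lra.
  apply is_lim_seq_minus'. apply is_lim_seq_const.
  replace 0 with (2 * 0) by lra. unfold Rdiv.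
  apply (is_lim_seq_scal_l _ 2 0).
  replace (Finite 0) with (Rbar_inv p_infty) by reflexivity.
  apply is_lim_seq_inv; [| discriminate].
  apply (is_lim_seq_plus _ _ p_infty 2 p_infty); [apply is_lim_seq_INR | apply is_lim_seq_const | ].
  now compute.
Qed.

Lemma ex_series_le_R (a b : nat -> R) : (forall n, Rabs (a n) <= b n) -> ex_series b -> ex_series a.
Proof. intros H Hb. apply (@ex_series_le R_AbsRing R_CompleteNormedModule a b); auto. Qed.

Lemma tail_bound (a M : nat -> R) : (forall k, Rabs (a k) <= M k) -> ex_series M ->
  forall N, Rabs (Series a - sum_n a N) <= Series M - sum_n M N.
Proof.
  intros HaM HM N.
  assert (Ha : ex_series a) by (apply ex_series_le_R with M; [intro; apply HaM | exact HM]).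
  rewrite (Series_incr_n a (S N)), (Series_incr_n M (S N)); try lia; auto.
  simpl pred. rewrite <- !sum_n_Reals.
  replace (sum_n a N + Series (fun k : nat => a (S N + k)%nat) - sum_n a N)
    with (Series (fun k : nat => a (S N + k)%nat)) by ring.
  replace (sum_n M N + Series (fun k : nat => M (S N + k)%nat) - sum_n M N)
    with (Series (fun k : nat => M (S N + k)%nat)) by ring.
  eapply Rle_trans. apply Series_Rabs.
  - apply ex_series_le_R with (fun k => M (S N + k)%nat).
    + intro k. rewrite Rabs_Rabsolu. apply (HaM (S N + k)%nat).
    + apply ex_series_incr_n. exact HM.
  - apply Series_le. intro k; split; [apply Rabs_pos | apply HaM].
    apply ex_series_incr_n. exact HM.
Qed.

Lemma tail_lim (M : nat -> R) : ex_series M -> is_lim_seq (fun N => Series M - sum_n M N) 0.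
Proof.
  intro HM. replace 0 with (Series M - Series M) by ring.
  apply is_lim_seq_minus'. apply is_lim_seq_const.
  apply is_series_lim. apply Series_correct. exact HM.
Qed.

Lemma tail_small (M : nat -> R) : ex_series M -> forall eps, 0 < eps ->
  exists N, forall n, (N <= n)%nat -> Series M - sum_n M n < eps.
Proof.
  intros HM eps Heps. pose proof (tail_lim M HM) as H.
  apply is_lim_seq_Reals in H. destruct (H eps Heps) as [N HN].
  exists N. intros n Hn. specialize (HN n Hn). unfold R_dist in HN.
  rewrite Rminus_0_r in HN. apply Rabs_def2 in HN. lra.
Qed.

Lemma is_derive_sum_n (a a' : nat -> R -> R) x N :
  (forall k, is_derive (a k) x (a' k x)) ->
  is_derive (fun t => sum_n (fun k => a k t) N) x (sum_n (fun k => a' k x) N).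
Proof.
  intro H. induction N.
  - rewrite sum_n_0. apply is_derive_ext with (a 0%nat); [intro; now rewrite sum_n_0 | apply H].
  - rewrite sum_n_S. apply is_derive_ext with (fun t => sum_n (fun k => a k t) N + a (S N) t).
    + intro; now rewrite sum_n_S.
    + apply (is_derive_plus (fun t => sum_n (fun k => a k t) N) (a (S N))); auto.
Qed.

Lemma continuous_sum_n (a : nat -> R -> R) x N :
  (forall k, continuous (a k) x) -> continuous (fun t => sum_n (fun k => a k t) N) x.
Proof.
  intro H. induction N.
  - apply continuous_ext with (a 0%nat); [intro; now rewrite sum_n_0 | apply H].
  - apply continuous_ext with (fun t => sum_n (fun k => a k t) N + a (S N) t).
    + intro; now rewrite sum_n_S.
    + apply (continuous_plus (fun t => sum_n (fun k => a k t) N) (a (S N))); auto.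
Qed.

Lemma series_derive (a a' : nat -> R -> R) (M : nat -> R) x :
  (forall k t, is_derive (a k) t (a' k t)) -> (forall k t, continuous (a' k) t) ->
  (forall k t, Rabs (a k t) <= M k) -> (forall k t, Rabs (a' k t) <= M k) -> ex_series M ->
  is_derive (fun t => Series (fun k => a k t)) x (Series (fun k => a' k x)).
Proof.
  intros Hd Hc Ha Ha' HM.
  apply is_derive_Reals.
  set (r := mkposreal 1 Rlt_0_1).
  assert (HCVU : CVU (fun n t => sum_n (fun k => a' k t) n) (fun t => Series (fun k => a' k t)) x r).
  { intros eps Heps. destruct (tail_small M HM eps Heps) as [N HN].
    exists N. intros n y Hn _.
    eapply Rle_lt_trans; [apply (tail_bound (fun k => a' k y) M) | apply HN]; auto. }
  apply (derivable_pt_lim_CVU (fun n t => sum_n (fun k => a k t) n)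
           (fun n t => sum_n (fun k => a' k t) n) (fun t => Series (fun k => a k t)) (fun t => Series (fun k => a' k t)) x x r).
  - unfold Boule. rewrite Rminus_eq_0, Rabs_R0. simpl; lra.
  - intros y n _. apply is_derive_Reals, is_derive_sum_n. auto.
  - intros y _. apply is_lim_seq_Reals. apply is_series_lim. apply Series_correct.
    apply ex_series_le_R with M; auto.
  - exact HCVU.
  - intros y Hy. apply (CVU_continuity _ _ x r HCVU); auto.
    intros n z _. apply continuity_pt_filterlim. apply continuous_sum_n. auto.
Qed.

Lemma series_continuous (a : nat -> R -> R) (M : nat -> R) x :
  (forall k t, continuous (a k) t) -> (forall k t, Rabs (a k t) <= M k) -> ex_series M ->
  continuous (fun t => Series (fun k => a k t)) x.
Proof.
  intros Hc Ha HM.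
  set (r := mkposreal 1 Rlt_0_1).
  assert (HCVU : CVU (fun n t => sum_n (fun k => a k t) n) (fun t => Series (fun k => a k t)) x r).
  { intros eps Heps. destruct (tail_small M HM eps Heps) as [N HN].
    exists N. intros n y Hn _.
    eapply Rle_lt_trans; [apply (tail_bound (fun k => a k y) M) | apply HN]; auto. }
  apply continuity_pt_filterlim.
  apply (CVU_continuity _ _ x r HCVU).
  - intros n z _. apply continuity_pt_filterlim. apply continuous_sum_n. auto.
  - unfold Boule. rewrite Rminus_eq_0, Rabs_R0. simpl; lra.
Qed.

Lemma incr_by_deriv f f' a b : a <= b -> (forall c, a <= c <= b -> is_derive f c (f' c)) ->
  (forall c, a < c < b -> 0 <= f' c) -> f a <= f b.
Proof.
  intros Hab Hd Hp. destruct (Req_dec a b) as [->|Hne]; [lra|].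
  destruct (MVT_cor2 f f' a b) as [c [Hc1 Hc2]]; [lra| |].
  - intros c Hc. apply is_derive_Reals. auto.
  - pose proof (Hp c Hc2). nra.
Qed.

Lemma const_by_deriv f f' a b : a <= b -> (forall c, a <= c <= b -> is_derive f c (f' c)) ->
  (forall c, a < c < b -> f' c = 0) -> f b = f a.
Proof.
  intros Hab Hd Hp. apply Rle_antisym.
  - assert (H := incr_by_deriv (fun t => - f t) (fun t => - f' t) a b Hab).
    assert (- f a <= - f b); [|lra]. apply H.
    + intros c Hc. apply (is_derive_opp f). auto.
    + intros c Hc. rewrite Hp; auto. lra.
  - apply (incr_by_deriv f f' a b Hab Hd). intros c Hc. rewrite Hp; auto. lra.
Qed.

Lemma comp_by_deriv g g' h h' a b : a <= b ->
  (forall c, a <= c <= b -> is_derive g c (g' c)) ->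
  (forall c, a <= c <= b -> is_derive h c (h' c)) ->
  (forall c, a < c < b -> Rabs (g' c) <= h' c) -> Rabs (g b - g a) <= h b - h a.
Proof.
  intros Hab Hg Hh Hb.
  assert (H1 := incr_by_deriv (fun t => h t - g t) (fun t => h' t - g' t) a b Hab).
  assert (H2 := incr_by_deriv (fun t => h t + g t) (fun t => h' t + g' t) a b Hab).
  simpl in H1, H2. apply Rabs_le. split.
  - enough (h a + g a <= h b + g b) by lra. apply H2.
    + intros c Hc. apply (is_derive_plus h g); auto.
    + intros c Hc. specialize (Hb c Hc). apply Rabs_le_between in Hb. lra.
  - enough (h a - g a <= h b - g b) by lra. apply H1.
    + intros c Hc. apply (is_derive_minus h g); auto.
    + intros c Hc. specialize (Hb c Hc). apply Rabs_le_between in Hb. lra.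
Qed.

Lemma sum_n_opp (a : nat -> R) N : sum_n (fun k => - a k) N = - sum_n a N.
Proof. induction N; toR. rewrite !sum_n_0. ring. rewrite !sum_n_S, IHN. ring. Qed.
Lemma sum_n_scal (c : R) (a : nat -> R) N : sum_n (fun k => c * a k) N = c * sum_n a N.
Proof. induction N; toR. rewrite !sum_n_0. ring. rewrite !sum_n_S, IHN. ring. Qed.
Lemma sum_n_add (a b : nat -> R) N : sum_n (fun k => a k + b k) N = sum_n a N + sum_n b N.
Proof. induction N; toR. rewrite !sum_n_0. ring. rewrite !sum_n_S, IHN. ring. Qed.
Lemma sum_n_sub (a b : nat -> R) N : sum_n (fun k => a k - b k) N = sum_n a N - sum_n b N.
Proof. induction N; toR. rewrite !sum_n_0. ring. rewrite !sum_n_S, IHN. ring. Qed.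
Lemma sum_n_extR (a b : nat -> R) N : (forall k, a k = b k) -> sum_n a N = sum_n b N.
Proof. intro H. induction N; toR. rewrite !sum_n_0. auto. rewrite !sum_n_S, IHN, H. ring. Qed.

Lemma cont_R (f : R -> R) x : ex_derive f x -> continuous f x.
Proof. apply (@ex_derive_continuous R_AbsRing R_NormedModule). Qed.

Ltac gen_exp := unfold Rminus in *; repeat match goal with |- context [exp ?x] =>
  let e := fresh "e" in let He := fresh "He" in pose proof (exp_pos x) as He;
  set (e := exp x) in *; clearbody e end.


Definition od (k : nat) : R := 2 * INR k + 1.

Lemma od_ge1 k : 1 <= od k.
Proof. unfold od. pose proof (pos_INR k). lra. Qed.

Lemma od_S k : od (S k) = od k + 2.
Proof. unfold od. rewrite S_INR. ring. Qed.

Lemma od_INR k : od k = INR (2 * k + 1).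
Proof. unfold od. rewrite plus_INR, mult_INR. simpl. ring. Qed.

Lemma trig_od k : cos (od k * (PI/2)) = 0 /\ sin (od k * (PI/2)) = (-1)^k.
Proof.
  induction k.
  - unfold od; simpl. replace ((2 * 0 + 1) * (PI / 2)) with (PI/2) by ring.
    rewrite cos_PI2, sin_PI2. lra.
  - rewrite od_S. replace ((od k + 2) * (PI / 2)) with (od k * (PI/2) + PI) by field.
    rewrite neg_cos, neg_sin. destruct IHk as [-> ->]. simpl. lra.
Qed.

Lemma sin_od_PI k : sin (od k * PI) = 0.
Proof.
  replace (od k * PI) with (2 * (od k * (PI/2))) by field.
  rewrite sin_2a. destruct (trig_od k) as [-> _]. ring.
Qed.

Lemma cos_od_PI k : cos (od k * PI) = -1.
Proof.
  replace (od k * PI) with (2 * (od k * (PI/2))) by field.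
  rewrite cos_2a_cos. destruct (trig_od k) as [-> _]. ring.
Qed.

Lemma cos_od_refl k t : cos (od k * (PI - t)) = - cos (od k * t).
Proof.
  replace (od k * (PI - t)) with (od k * PI - od k * t) by ring.
  rewrite cos_minus, cos_od_PI, sin_od_PI. ring.
Qed.

Lemma Series_zero (a : nat -> R) : (forall k, a k = 0) -> Series a = 0.
Proof.
  intro H. rewrite (Series_ext a (fun k => 0 * 1)) by (intro; rewrite H; ring).
  rewrite Series_scal_l. ring.
Qed.

Lemma dirichlet N t : 2 * sin t * sum_n (fun k => cos (od k * t)) N = sin (2 * INR (S N) * t).
Proof.
  induction N.
  - rewrite sum_n_0. unfold od. simpl. replace ((2 * 0 + 1) * t) with t by ring.
    replace (2 * 1 * t) with (2 * t) by ring. rewrite sin_2a. ring.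
  - rewrite sum_n_S. rewrite Rmult_plus_distr_l, IHN.
    rewrite (S_INR (S N)).
    replace (2 * (INR (S N) + 1) * t) with (od (S N) * t + t) by (unfold od; ring).
    replace (2 * INR (S N) * t) with (od (S N) * t - t) by (unfold od; ring).
    rewrite sin_plus, sin_minus. ring.
Qed.

Definition S1 N t := sum_n (fun k => sin (od k * t) / od k) N.
Definition C2 N t := sum_n (fun k => cos (od k * t) / (od k)^2) N.

Lemma S1_derive N t : is_derive (S1 N) t (sum_n (fun k => cos (od k * t)) N).
Proof.
  unfold S1. apply (is_derive_sum_n (fun k t => sin (od k * t) / od k) (fun k t => cos (od k * t))).
  intro k. pose proof (od_ge1 k). auto_derive; auto. field. lra.
Qed.

Lemma C2_derive N t : is_derive (C2 N) t (- S1 N t).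
Proof.
  unfold C2, S1. rewrite <- (Ropp_involutive (sum_n _ N)).
  rewrite <- sum_n_opp, Ropp_involutive.
  apply (is_derive_sum_n (fun k t => cos (od k * t) / (od k)^2) (fun k t => - (sin (od k * t) / od k))).
  intro k. pose proof (od_ge1 k). auto_derive; auto. field. lra.
Qed.

Lemma sin_pos_open t : 0 < t < PI -> 0 < sin t.
Proof. intros [H1 H2]. apply sin_gt_0; auto. Qed.

Lemma DirBound N s : 0 < s <= PI/2 ->
  Rabs (S1 N (PI/2) - S1 N s) <= 1 / (2 * INR (S N) * sin s).
Proof.
  intros Hs. set (L := INR (S N)).
  assert (HL : 1 <= L) by (unfold L; rewrite S_INR; pose proof (pos_INR N); lra).
  assert (HPI := PI_RGT_0).
  set (G := fun t => S1 N t + cos (2 * L * t) / (4 * L * sin t)).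
  set (G' := fun t => - (cos (2 * L * t) * cos t) / (4 * L * (sin t)^2)).
  set (H := fun t => - 1 / (4 * L * sin t)).
  set (H' := fun t => cos t / (4 * L * (sin t)^2)).
  assert (Hsin : forall t, s <= t <= PI/2 -> 0 < sin t).
  { intros t Ht. apply sin_pos_open. lra. }
  assert (Hcmp : Rabs (G (PI/2) - G s) <= H (PI/2) - H s).
  { apply comp_by_deriv with G' H'; [lra | | |].
    - intros t Ht. specialize (Hsin t Ht).
      assert (H1 := S1_derive N t).
      assert (H2 : is_derive (fun t => cos (2 * L * t) / (4 * L * sin t)) t
          ((- (2 * L * sin (2 * L * t)) * (4 * L * sin t) - cos (2 * L * t) * (4 * L * cos t)) / (4 * L * sin t)^2)).
      { auto_derive. apply Rgt_not_eq. nra. field. split; apply Rgt_not_eq; nra. }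
      assert (Hd := is_derive_plus _ _ _ _ _ H1 H2).
      unfold G, G'.
      replace (- (cos (2 * L * t) * cos t) / (4 * L * sin t ^ 2)) with
        (plus (sum_n (fun k : nat => cos (od k * t)) N)
          ((- (2 * L * sin (2 * L * t)) * (4 * L * sin t) - cos (2 * L * t) * (4 * L * cos t)) / (4 * L * sin t)^2)).
      exact Hd.
      change plus with Rplus. simpl.
      assert (HD := dirichlet N t). fold L in HD.
      replace (sum_n (fun k : nat => cos (od k * t)) N) with (sin (2 * L * t) / (2 * sin t)).
      2:{ rewrite <- HD. field. apply Rgt_not_eq; auto. }
      field. split; apply Rgt_not_eq; nra.
    - intros t Ht. specialize (Hsin t Ht). unfold H, H'.
      auto_derive. apply Rgt_not_eq. nra. field. split; apply Rgt_not_eq; nra.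
    - intros t Ht. assert (Ht' : s <= t <= PI/2) by lra. specialize (Hsin t Ht').
      unfold G', H'. assert (0 <= cos t) by (apply cos_ge_0; lra).
      rewrite Rabs_div by (apply Rgt_not_eq; nra).
      rewrite (Rabs_pos_eq (4 * L * sin t ^ 2)) by nra.
      unfold Rdiv. apply Rmult_le_compat_r. apply Rlt_le, Rinv_0_lt_compat. nra.
      rewrite Rabs_Ropp, Rabs_mult, (Rabs_pos_eq (cos t)) by lra.
      assert (Rabs (cos (2 * L * t)) <= 1) by apply Rabs_cos_le_1 || (apply Rabs_le; split; [apply COS_bound | apply COS_bound]).
      nra. }
  unfold G, H in Hcmp. rewrite sin_PI2 in Hcmp.
  assert (Hss : 0 < sin s) by (apply Hsin; lra).
  assert (Hc1 : Rabs (cos (2 * L * (PI/2))) <= 1) by (apply Rabs_le; split; apply COS_bound).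
  assert (Hc2 : Rabs (cos (2 * L * s)) <= 1) by (apply Rabs_le; split; apply COS_bound).
  set (A := cos (2 * L * (PI / 2))) in *. set (B := cos (2 * L * s)) in *.
  replace (S1 N (PI / 2) - S1 N s) with
    ((S1 N (PI / 2) + A / (4 * L * 1) - (S1 N s + B / (4 * L * sin s))) - A / (4 * L) + B / (4 * L * sin s))
    by (field; split; apply Rgt_not_eq; nra).
  eapply Rle_trans. apply Rabs_triang. eapply Rle_trans. apply Rplus_le_compat_r. apply Rabs_triang.
  rewrite Rabs_Ropp. rewrite !Rabs_div by (apply Rgt_not_eq; nra).
  rewrite (Rabs_pos_eq (4 * L)) by lra. rewrite (Rabs_pos_eq (4 * L * sin s)) by nra.
  assert (A1 : Rabs A / (4 * L) <= 1 / (4 * L)) by (unfold Rdiv; apply Rmult_le_compat_r; [apply Rlt_le, Rinv_0_lt_compat; lra | lra]).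
  assert (A2 : Rabs B / (4 * L * sin s) <= 1 / (4 * L * sin s)) by (unfold Rdiv; apply Rmult_le_compat_r; [apply Rlt_le, Rinv_0_lt_compat; nra | lra]).
  replace (1 / (2 * L * sin s)) with ((-1 / (4 * L * 1) - -1 / (4 * L * sin s)) + 1 / (4 * L) + 1 / (4 * L * sin s))
    by (field; split; apply Rgt_not_eq; nra).
  lra.
Qed.

Lemma S1_PI2_lim : is_lim_seq (fun N => S1 N (PI/2)) (PI/4).
Proof.
  assert (E : forall N, S1 N (PI/2) = sum_f_R0 (tg_alt PI_tg) N).
  { intro N. unfold S1. rewrite <- sum_n_Reals. apply sum_n_extR. intro k.
    unfold tg_alt, PI_tg. rewrite (proj2 (trig_od k)). rewrite od_INR. reflexivity. }
  apply is_lim_seq_ext with (fun N => sum_f_R0 (tg_alt PI_tg) N); [intro; now rewrite E|].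
  apply is_lim_seq_Reals.
  pose proof Alt_PI_eq as HA. unfold Alt_PI in HA. destruct exist_PI as [l Hl].
  replace (PI/4) with l by lra. exact Hl.
Qed.

Lemma lim_inv_N (c : R) : is_lim_seq (fun N => c / INR (S N)) 0.
Proof.
  replace 0 with (c * 0) by ring. unfold Rdiv.
  apply (is_lim_seq_scal_l _ c 0).
  replace (Finite 0) with (Rbar_inv p_infty) by reflexivity.
  apply is_lim_seq_inv; [| discriminate].
  apply (is_lim_seq_incr_1 INR p_infty). apply is_lim_seq_INR.
Qed.

Lemma C2_PI2 N : C2 N (PI/2) = 0.
Proof.
  unfold C2. toR. rewrite (sum_n_extR _ (fun k => 0 * 1)).
  rewrite sum_n_scal. ring. intro k. rewrite (proj1 (trig_od k)). unfold Rdiv. ring.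
Qed.

Lemma C2_bound N phi : 0 < phi <= PI/2 ->
  Rabs (C2 N phi - (PI/2 - phi) * S1 N (PI/2)) <= (PI/2 - phi) / (2 * INR (S N) * sin phi).
Proof.
  intros Hp. set (L := INR (S N)).
  assert (HL : 1 <= L) by (unfold L; rewrite S_INR; pose proof (pos_INR N); lra).
  assert (HPI := PI_RGT_0).
  assert (Hsp : 0 < sin phi) by (apply sin_pos_open; lra).
  set (g := fun t => C2 N t + t * S1 N (PI/2)).
  set (h := fun t => t / (2 * L * sin phi)).
  assert (H := comp_by_deriv g (fun t => - S1 N t + S1 N (PI/2)) h (fun t => 1 / (2 * L * sin phi)) phi (PI/2)).
  unfold g, h in H. rewrite C2_PI2 in H.
  replace (C2 N phi - (PI / 2 - phi) * S1 N (PI / 2)) with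
    (- (0 + PI / 2 * S1 N (PI / 2) - (C2 N phi + phi * S1 N (PI / 2)))) by ring.
  rewrite Rabs_Ropp.
  replace ((PI / 2 - phi) / (2 * L * sin phi)) with
    (PI / 2 / (2 * L * sin phi) - phi / (2 * L * sin phi)) by (field; split; apply Rgt_not_eq; nra).
  apply H; clear H.
  - lra.
  - intros c Hc. apply (is_derive_plus (C2 N) (fun t => t * S1 N (PI/2))).
    apply C2_derive. auto_derive; auto. ring.
  - intros c Hc. auto_derive. exact I. field. split; apply Rgt_not_eq; nra.
  - intros c Hc.
    assert (Hsc : sin phi <= sin c) by (apply sin_incr_1; lra).
    pose proof (DirBound N c ltac:(lra)) as HD. fold L in HD.
    replace (- S1 N c + S1 N (PI / 2)) with (S1 N (PI / 2) - S1 N c) by ring.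
    eapply Rle_trans. exact HD. unfold Rdiv. rewrite !Rmult_1_l.
    apply Rinv_le_contravar. nra. nra.
Qed.

Lemma C2_lim_half phi : 0 < phi <= PI/2 -> is_lim_seq (fun N => C2 N phi) ((PI/4) * (PI/2 - phi)).
Proof.
  intros Hp. assert (HPI := PI_RGT_0).
  assert (Hsp : 0 < sin phi) by (apply sin_pos_open; lra).
  set (c := (PI/2 - phi) / (2 * sin phi)).
  apply is_lim_seq_le_le with (u := fun N => (PI/2 - phi) * S1 N (PI/2) - c / INR (S N))
                              (w := fun N => (PI/2 - phi) * S1 N (PI/2) + c / INR (S N)).
  - intro N. pose proof (C2_bound N phi Hp) as HB. apply Rabs_le_between in HB.
    replace ((PI / 2 - phi) / (2 * INR (S N) * sin phi)) with (c / INR (S N)) in HB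
      by (unfold c; field; split; [apply Rgt_not_eq; auto | apply not_0_INR; lia]).
    lra.
  - replace (PI / 4 * (PI / 2 - phi)) with ((PI/2 - phi) * (PI/4) - 0) by ring.
    apply is_lim_seq_minus'. apply (is_lim_seq_scal_l _ _ (PI/4)). apply S1_PI2_lim. apply lim_inv_N.
  - replace (PI / 4 * (PI / 2 - phi)) with ((PI/2 - phi) * (PI/4) + 0) by ring.
    apply is_lim_seq_plus'. apply (is_lim_seq_scal_l _ _ (PI/4)). apply S1_PI2_lim. apply lim_inv_N.
Qed.

Lemma C2_refl N t : C2 N (PI - t) = - C2 N t.
Proof.
  unfold C2. toR. rewrite <- sum_n_opp. apply sum_n_extR. intro k. rewrite cos_od_refl. unfold Rdiv. ring.
Qed.

Lemma P2_series t : 0 < t < PI ->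
  is_series (fun k => cos (od k * t) / (od k)^2) ((PI/4) * (PI/2 - t)).
Proof.
  intros Ht. apply is_series_lim. fold (C2). change (is_lim_seq (fun N => C2 N t) (PI / 4 * (PI / 2 - t))).
  destruct (Rle_lt_dec t (PI/2)).
  - apply C2_lim_half. lra.
  - apply is_lim_seq_ext with (fun N => - C2 N (PI - t)).
    { intro N. rewrite C2_refl. ring. }
    replace (PI / 4 * (PI / 2 - t)) with (- (PI/4 * (PI/2 - (PI - t)))) . 2: { field. }
    apply (is_lim_seq_opp (fun N => C2 N (PI - t)) (PI/4 * (PI/2 - (PI - t)))). apply C2_lim_half. lra.
Qed.

Lemma od2_le_M k : / (od k)^2 <= Mser k.
Proof.
  unfold Mser, od. pose proof (pos_INR k) as H.
  unfold Rdiv.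
  replace (2 * / ((INR k + 1) * (INR k + 2))) with (/ (((INR k + 1) * (INR k + 2)) / 2)) by (field; lra).
  apply Rinv_le_contravar. nra. nra.
Qed.

Lemma Mser_ex : ex_series Mser.
Proof. exists 2. apply Mser_is. Qed.

Definition SinS (c : nat -> R) (t : R) := Series (fun k => sin (od k * t) * c k).
Definition CosS (c : nat -> R) (t : R) := Series (fun k => cos (od k * t) * c k).

Definition cbound (c : nat -> R) := forall k, Rabs (c k) <= / (od k)^2.

Lemma sin_term_bound c k t : cbound c -> Rabs (sin (od k * t) * c k) <= Mser k.
Proof.
  intro H. rewrite Rabs_mult. eapply Rle_trans; [| apply od2_le_M].
  rewrite <- (Rmult_1_l (/ _)). apply Rmult_le_compat; try apply Rabs_pos.
  apply Rabs_le; split; apply SIN_bound. apply H.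
Qed.
Lemma cos_term_bound c k t : cbound c -> Rabs (cos (od k * t) * c k) <= Mser k.
Proof.
  intro H. rewrite Rabs_mult. eapply Rle_trans; [| apply od2_le_M].
  rewrite <- (Rmult_1_l (/ _)). apply Rmult_le_compat; try apply Rabs_pos.
  apply Rabs_le; split; apply COS_bound. apply H.
Qed.

Lemma SinS_ex c t : cbound c -> ex_series (fun k => sin (od k * t) * c k).
Proof. intro H. apply ex_series_le_R with Mser. intro; apply sin_term_bound; auto. apply Mser_ex. Qed.
Lemma CosS_ex c t : cbound c -> ex_series (fun k => cos (od k * t) * c k).
Proof. intro H. apply ex_series_le_R with Mser. intro; apply cos_term_bound; auto. apply Mser_ex. Qed.

Lemma SinS_derive c x : cbound c -> cbound (fun k => od k * c k) ->
  is_derive (SinS c) x (CosS (fun k => od k * c k) x).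
Proof.
  intros H1 H2. unfold SinS, CosS.
  apply (series_derive (fun k t => sin (od k * t) * c k) (fun k t => cos (od k * t) * (od k * c k)) Mser x).
  - intros k t. auto_derive; auto. ring.
  - intros k t. apply cont_R. auto_derive; auto.
  - intros; apply sin_term_bound; auto.
  - intros; apply (cos_term_bound (fun k => od k * c k)); auto.
  - apply Mser_ex.
Qed.

Lemma CosS_derive c x : cbound c -> cbound (fun k => od k * c k) ->
  is_derive (CosS c) x (- SinS (fun k => od k * c k) x).
Proof.
  intros H1 H2. unfold SinS, CosS. rewrite <- Series_opp.
  apply (series_derive (fun k t => cos (od k * t) * c k) (fun k t => - (sin (od k * t) * (od k * c k))) Mser x).
  - intros k t. auto_derive; auto. ring.
  - intros k t. apply cont_R. auto_derive; auto.
  - intros; apply cos_term_bound; auto.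
  - intros; rewrite Rabs_Ropp; apply (sin_term_bound (fun k => od k * c k)); auto.
  - apply Mser_ex.
Qed.

Definition cP3 k := / (od k)^3.
Definition cP2 k := / (od k)^2.

Lemma cbound_P3 : cbound cP3.
Proof. intro k. unfold cP3. pose proof (od_ge1 k). rewrite Rabs_pos_eq.
  apply Rinv_le_contravar; nra. apply Rlt_le, Rinv_0_lt_compat; nra. Qed.
Lemma cbound_P2 : cbound cP2.
Proof. intro k. unfold cP2. pose proof (od_ge1 k). rewrite Rabs_pos_eq. lra.
  apply Rlt_le, Rinv_0_lt_compat; nra. Qed.
Lemma od_cP3 k : od k * cP3 k = cP2 k.
Proof. unfold cP3, cP2. pose proof (od_ge1 k). field. lra. Qed.

Lemma cbound_ext c c' : (forall k, c k = c' k) -> cbound c' -> cbound c.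
Proof. intros E H k. rewrite E. apply H. Qed.

Lemma CosS_P2 t : 0 < t < PI -> CosS cP2 t = (PI/4) * (PI/2 - t).
Proof.
  intro Ht. unfold CosS. apply is_series_unique.
  apply is_series_ext with (fun k => cos (od k * t) / (od k)^2).
  intro; unfold cP2; reflexivity. now apply P2_series.
Qed.

Lemma SinS_P3 t : 0 <= t <= PI -> SinS cP3 t = PI/8 * t * (PI - t).
Proof.
  intro Ht.
  assert (HD : forall x, is_derive (SinS cP3) x (CosS cP2 x)).
  { intro x. unfold CosS. rewrite (Series_ext _ (fun k => cos (od k * x) * (od k * cP3 k))).
    fold (CosS (fun k => od k * cP3 k) x). apply SinS_derive. apply cbound_P3.
    apply cbound_ext with cP2. apply od_cP3. apply cbound_P2.
    intro; now rewrite od_cP3. }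
  assert (E := const_by_deriv (fun x => SinS cP3 x - PI/8 * x * (PI - x))
                (fun x => CosS cP2 x - PI/8 * (PI - 2 * x)) 0 t (proj1 Ht)).
  simpl in E.
  assert (E0 : SinS cP3 0 = 0).
  { unfold SinS. apply Series_zero. intro. rewrite Rmult_0_r, sin_0. ring. }
  rewrite E0 in E.
  enough (SinS cP3 t - PI / 8 * t * (PI - t) = 0) by lra.
  rewrite E. ring.
  - intros c Hc. apply (is_derive_minus (SinS cP3) (fun x => PI/8 * x * (PI - x))). apply HD.
    auto_derive; auto. ring.
  - intros c Hc. rewrite CosS_P2 by lra. field.
Qed.


Definition ch (z : R) := (exp z + exp (- z)) / 2.
Definition sh (z : R) := (exp z - exp (- z)) / 2.

Lemma ch_pos z : 0 < ch z.
Proof. unfold ch. pose proof (exp_pos z). pose proof (exp_pos (-z)). lra. Qed.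
Lemma ch_even z : ch (- z) = ch z.
Proof. unfold ch. rewrite Ropp_involutive. field. Qed.
Lemma sh_pos z : 0 < z -> 0 < sh z.
Proof. intro. unfold sh. assert (exp (- z) < exp z) by (apply exp_increasing; lra). lra. Qed.
Lemma sh_0 : sh 0 = 0.
Proof. unfold sh. rewrite Ropp_0. field. Qed.
Lemma ch_0 : ch 0 = 1.
Proof. unfold ch. rewrite Ropp_0, exp_0. field. Qed.

Lemma SinS_derive' c c' x : (forall k, od k * c k = c' k) -> cbound c -> cbound c' ->
  is_derive (SinS c) x (CosS c' x).
Proof.
  intros E H1 H2. unfold CosS. rewrite (Series_ext _ (fun k => cos (od k * x) * (od k * c k))).
  apply SinS_derive; auto. apply cbound_ext with c'; auto.
  intro; now rewrite E.
Qed.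
Lemma CosS_derive' c c' x : (forall k, od k * c k = c' k) -> cbound c -> cbound c' ->
  is_derive (CosS c) x (- SinS c' x).
Proof.
  intros E H1 H2. unfold SinS. rewrite (Series_ext _ (fun k => sin (od k * x) * (od k * c k))).
  apply CosS_derive; auto. apply cbound_ext with c'; auto.
  intro; now rewrite E.
Qed.

Section Q.
Variable m : R.
Hypothesis Hm : 0 < m.

Definition cQ k := / ((od k)^3 * ((od k)^2 + m^2)).
Definition cQ1 k := / ((od k)^2 * ((od k)^2 + m^2)).
Definition cE k := / (od k * ((od k)^2 + m^2)).

Lemma cbound_gen (p : nat) (Hp : (1 <= p)%nat) : cbound (fun k => / ((od k)^p * ((od k)^2 + m^2))).
Proof.
  intro k. pose proof (od_ge1 k) as H1.
  assert (Hpow : 1 <= od k ^ p) by (apply pow_R1_Rle; lra).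
  assert (Hpow2 : od k <= od k ^ p).
  { destruct p. lia. simpl. rewrite <- (Rmult_1_r (od k)) at 1. apply Rmult_le_compat_l; [lra|]. apply pow_R1_Rle; lra. }
  assert (0 <= m^2) by nra.
  rewrite Rabs_pos_eq by (apply Rlt_le, Rinv_0_lt_compat; nra).
  apply Rinv_le_contravar. nra. nra.
Qed.

Lemma cbound_Q : cbound cQ. Proof. apply (cbound_gen 3). lia. Qed.
Lemma cbound_Q1 : cbound cQ1. Proof. apply (cbound_gen 2). lia. Qed.
Lemma cbound_E : cbound cE.
Proof. apply cbound_ext with (fun k => / ((od k)^1 * ((od k)^2 + m^2))). intro; unfold cE; now rewrite pow_1.
  apply (cbound_gen 1). lia. Qed.

Lemma od_cQ k : od k * cQ k = cQ1 k.
Proof. unfold cQ, cQ1. pose proof (od_ge1 k). assert (0 <= m^2) by nra. field. split; nra. Qed.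
Lemma od_cQ1 k : od k * cQ1 k = cE k.
Proof. unfold cE, cQ1. pose proof (od_ge1 k). assert (0 <= m^2) by nra. field. split; nra. Qed.
Lemma cE_split k : cE k = cP3 k - m^2 * cQ k.
Proof. unfold cE, cQ, cP3. pose proof (od_ge1 k). assert (0 <= m^2) by nra. field. split; nra. Qed.

Lemma SinS_E t : SinS cE t = SinS cP3 t - m^2 * SinS cQ t.
Proof.
  unfold SinS. rewrite <- Series_scal_l, <- Series_minus.
  apply Series_ext. intro k. rewrite cE_split. ring.
  apply SinS_ex, cbound_P3.
  apply ex_series_le_R with (fun k => m^2 * Mser k).
  intro k. rewrite Rabs_mult, (Rabs_pos_eq (m^2)) by nra. apply Rmult_le_compat_l. nra.
  apply sin_term_bound, cbound_Q.
  apply (@ex_series_scal_l R_AbsRing R_CompleteNormedModule). apply Mser_ex.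
Qed.

Definition q t := PI / (8 * m^2) * t * (PI - t) - PI / (4 * m^4) * (1 - ch (m * (t - PI/2)) / ch (m * PI / 2)).
Definition q1 t := PI / (8 * m^2) * (PI - 2 * t) + PI / (4 * m^3) * sh (m * (t - PI/2)) / ch (m * PI / 2).
Definition q2 t := - PI / (4 * m^2) + PI / (4 * m^2) * ch (m * (t - PI/2)) / ch (m * PI / 2).

Lemma q_derive t : is_derive q t (q1 t).
Proof.
  unfold q, q1. pose proof (ch_pos (m * PI / 2)). unfold ch, sh in *.
  auto_derive. repeat split; apply Rgt_not_eq; try nra.
  toR. clear H. gen_exp. field. repeat split; apply Rgt_not_eq; try nra.
Qed.

Lemma q1_derive t : is_derive q1 t (q2 t).
Proof.
  unfold q1, q2. pose proof (ch_pos (m * PI / 2)). unfold ch, sh in *.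
  auto_derive. repeat split; apply Rgt_not_eq; try nra.
  toR. clear H. gen_exp. field. repeat split; apply Rgt_not_eq; try nra.
Qed.

Lemma q_ode t : - (PI/8 * t * (PI - t)) - q2 t = - m^2 * q t.
Proof.
  unfold q, q2. pose proof (ch_pos (m * PI / 2)).
  set (A := ch (m * (t - PI / 2))) in *. set (B := ch (m * PI / 2)) in *.
  field. split; apply Rgt_not_eq; nra.
Qed.

Lemma q_0 : q 0 = 0.
Proof.
  unfold q. replace (m * (0 - PI/2)) with (- (m * PI / 2)) by field.
  rewrite ch_even. pose proof (ch_pos (m * PI / 2)).
  set (B := ch (m * PI / 2)) in *. field. split; apply Rgt_not_eq; nra.
Qed.

Lemma q_PI : q PI = 0.
Proof.
  unfold q. replace (m * (PI - PI/2)) with (m * PI / 2) by field.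
  pose proof (ch_pos (m * PI / 2)).
  set (B := ch (m * PI / 2)) in *. field. split; apply Rgt_not_eq; nra.
Qed.

Definition D t := SinS cQ t - q t.
Definition D1 t := CosS cQ1 t - q1 t.

Lemma D_derive t : is_derive D t (D1 t).
Proof.
  unfold D, D1. apply (is_derive_minus (SinS cQ) q).
  apply SinS_derive'. apply od_cQ. apply cbound_Q. apply cbound_Q1. apply q_derive.
Qed.

Lemma D1_derive t : is_derive D1 t (- SinS cE t - q2 t).
Proof.
  unfold D1. apply (is_derive_minus (CosS cQ1) q1).
  apply CosS_derive'. apply od_cQ1. apply cbound_Q1. apply cbound_E. apply q1_derive.
Qed.

Lemma D_ode t : 0 <= t <= PI -> - SinS cE t - q2 t = m^2 * D t.
Proof.
  intro Ht. rewrite SinS_E, SinS_P3 by auto. unfold D.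
  pose proof (q_ode t). nra.
Qed.

Lemma D_0 : D 0 = 0.
Proof.
  unfold D. rewrite q_0. unfold SinS. rewrite Series_zero. ring.
  intro. rewrite Rmult_0_r, sin_0. ring.
Qed.

Lemma D_PI : D PI = 0.
Proof.
  unfold D. rewrite q_PI. unfold SinS. rewrite Series_zero. ring.
  intro. rewrite sin_od_PI. ring.
Qed.

Lemma sh_derive c : is_derive (fun s => sh (m * s)) c (m * ch (m * c)).
Proof. unfold sh, ch. auto_derive; auto. toR. gen_exp. field. Qed.
Lemma ch_derive c : is_derive (fun s => ch (m * s)) c (m * sh (m * c)).
Proof. unfold sh, ch. auto_derive; auto. toR. gen_exp. field. Qed.

Definition W t := D1 t * sh (m * t) - m * D t * ch (m * t).

Lemma W_zero t : 0 <= t <= PI -> W t = 0.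
Proof.
  intro Ht.
  assert (E := const_by_deriv W
    (fun s => (- SinS cE s - q2 s) * sh (m * s) + D1 s * (m * ch (m * s))
              - m * (D1 s * ch (m * s) + D s * (m * sh (m * s)))) 0 t (proj1 Ht)).
  rewrite E. unfold W. rewrite Rmult_0_r, D_0, sh_0. ring.
  - intros c Hc. unfold W.
    apply (is_derive_minus (fun s => D1 s * sh (m * s)) (fun s => m * D s * ch (m * s))).
    + apply (is_derive_mult D1 (fun s => sh (m * s))). apply D1_derive.
      apply sh_derive. intros; apply Rmult_comm.
    + apply is_derive_ext with (fun s => m * (D s * ch (m * s))). intro; toR; ring.
      apply (is_derive_scal (fun s => D s * ch (m * s))).
      apply (is_derive_mult D (fun s => ch (m * s))). apply D_derive.
      apply ch_derive. intros; apply Rmult_comm.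
  - intros c Hc. toR. rewrite D_ode by lra. ring.
Qed.

Lemma D_zero t : 0 <= t <= PI -> D t = 0.
Proof.
  intro Ht. destruct (Req_dec t 0) as [->|Ht0]; [apply D_0|].
  assert (Hsh : forall s, t <= s -> 0 < sh (m * s)) by (intros; apply sh_pos; nra).
  assert (E : D PI / sh (m * PI) = D t / sh (m * t)).
  { apply (const_by_deriv (fun s => D s / sh (m * s))
    (fun s => (D1 s * sh (m * s) - D s * (m * ch (m * s))) / sh (m * s) ^ 2) t PI (proj2 Ht)).
    - intros c Hc. apply (is_derive_div D (fun s => sh (m * s))). apply D_derive. apply sh_derive.
      apply Rgt_not_eq. apply Hsh. lra.
    - intros c Hc. assert (HW := W_zero c ltac:(lra)). unfold W in HW.
      replace (D1 c * sh (m * c) - D c * (m * ch (m * c))) with 0 by lra.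
      unfold Rdiv. toR. ring. }
  rewrite D_PI in E.
  assert (Hst := Hsh t (Rle_refl t)).
  assert (H : D t / sh (m * t) = 0). { rewrite <- E. unfold Rdiv. ring. }
  unfold Rdiv in H. apply Rmult_integral in H. destruct H as [H|H]; auto.
  exfalso. apply Rinv_neq_0_compat in H; auto. lra.
Qed.

Lemma E_closed t : 0 <= t <= PI ->
  SinS cE t = PI / (4 * m^2) * (1 - ch (m * (t - PI/2)) / ch (m * PI / 2)).
Proof.
  intro Ht. rewrite SinS_E, SinS_P3 by auto.
  assert (HD := D_zero t Ht). unfold D in HD.
  replace (SinS cQ t) with (q t) by lra. unfold q.
  pose proof (ch_pos (m * PI / 2)).
  set (A := ch (m * (t - PI / 2))) in *. set (B := ch (m * PI / 2)) in *.
  field. split; apply Rgt_not_eq; nra.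
Qed.

End Q.


Definition Sb (b : R) : R := if Req_EM_T b 0 then 0 else 2 * (1 - cos (b / 2)) / b.

Lemma is_RInt_derive_R (f df : R -> R) a b :
  (forall x, Rmin a b <= x <= Rmax a b -> is_derive f x (df x)) ->
  (forall x, Rmin a b <= x <= Rmax a b -> continuous df x) -> is_RInt df a b (f b - f a).
Proof. intros. exact (is_RInt_derive f df a b H H0). Qed.

Lemma is_RInt_sgn (g G : R -> R) : (forall t, is_derive G t (g t)) -> (forall t, continuous g t) ->
  is_RInt (fun y => sgn y * g y) (-1/2) (1/2) ((G (1/2) - G 0) - (G 0 - G (-1/2))).
Proof.
  intros Hd Hc.
  replace ((G (1/2) - G 0) - (G 0 - G (-1/2))) with (plus (- (G 0 - G (-1/2))) (G (1/2) - G 0))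
    by (change plus with Rplus; toR; lra).
  apply (@is_RInt_Chasles R_NormedModule) with 0.
  - apply is_RInt_ext with (fun y => - g y).
    + intros y Hy. rewrite Rmin_left in Hy by lra. rewrite Rmax_right in Hy by lra.
      unfold sgn. destruct (Rlt_dec 0 y); [lra|]. toR; ring.
    + replace (- (G 0 - G (-1 / 2))) with (- G 0 - - G (-1/2)) by (toR; lra).
      apply (is_RInt_derive_R (fun y => - G y) (fun y => - g y) (-1/2) 0).
      * intros; apply (is_derive_opp G); auto.
      * intros. apply (continuous_opp g). auto.
      all: idtac.
  - apply is_RInt_ext with g.
    + intros y Hy. rewrite Rmin_left in Hy by lra. rewrite Rmax_right in Hy by lra.
      unfold sgn. destruct (Rlt_dec 0 y); [|lra]. toR; ring.
    + apply (is_RInt_derive_R G g 0 (1/2)); auto.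
Qed.

Lemma is_RInt_sgn_cos a b : is_RInt (fun y => sgn y * cos (a + b * y)) (-1/2) (1/2) (- sin a * Sb b).
Proof.
  unfold Sb. destruct (Req_EM_T b 0) as [->|Hb].
  - apply is_RInt_ext with (fun y => sgn y * cos a).
    { intros. rewrite Rmult_0_l, Rplus_0_r. reflexivity. }
    replace (- sin a * 0) with ((1/2 * cos a - 0 * cos a) - (0 * cos a - (-1/2) * cos a)) by (toR; field).
    apply (is_RInt_sgn (fun _ => cos a) (fun y => y * cos a)).
    + intro; auto_derive; auto. toR; ring.
    + intro; apply continuous_const.
  - replace (- sin a * (2 * (1 - cos (b / 2)) / b)) with
      ((sin (a + b * (1/2)) / b - sin (a + b * 0) / b) - (sin (a + b * 0) / b - sin (a + b * (-1/2)) / b)).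
    apply (is_RInt_sgn (fun y => cos (a + b * y)) (fun y => sin (a + b * y) / b)).
    + intro; auto_derive; auto. toR; field; auto.
    + intro; apply cont_R; auto_derive; auto.
    + replace (a + b * (1/2)) with (a + b/2) by (toR; field).
      replace (a + b * (-1/2)) with (a - b/2) by (toR; field).
      rewrite Rmult_0_r, Rplus_0_r, sin_plus, sin_minus.
      set (cb := cos (b/2)). set (sb := sin (b/2)). toR. field. auto.
Qed.

Lemma is_RInt_sgn_sin a b : is_RInt (fun y => sgn y * sin (a + b * y)) (-1/2) (1/2) (cos a * Sb b).
Proof.
  unfold Sb. destruct (Req_EM_T b 0) as [->|Hb].
  - apply is_RInt_ext with (fun y => sgn y * sin a).
    { intros. rewrite Rmult_0_l, Rplus_0_r. reflexivity. }
    replace (cos a * 0) with ((1/2 * sin a - 0 * sin a) - (0 * sin a - (-1/2) * sin a)) by (toR; field).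
    apply (is_RInt_sgn (fun _ => sin a) (fun y => y * sin a)).
    + intro; auto_derive; auto. toR; ring.
    + intro; apply continuous_const.
  - replace (cos a * (2 * (1 - cos (b / 2)) / b)) with
      ((- cos (a + b * (1/2)) / b - - cos (a + b * 0) / b) - (- cos (a + b * 0) / b - - cos (a + b * (-1/2)) / b)).
    apply (is_RInt_sgn (fun y => sin (a + b * y)) (fun y => - cos (a + b * y) / b)).
    + intro; auto_derive; auto. toR; field; auto.
    + intro; apply cont_R; auto_derive; auto.
    + replace (a + b * (1/2)) with (a + b/2) by (toR; field).
      replace (a + b * (-1/2)) with (a - b/2) by (toR; field).
      rewrite Rmult_0_r, Rplus_0_r, cos_plus, cos_minus.
      set (cb := cos (b/2)). set (sb := sin (b/2)). toR. field. auto.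
Qed.

Lemma is_RInt_scal_R (f : R -> R) a b k l : is_RInt f a b l -> is_RInt (fun x => k * f x) a b (k * l).
Proof. intro H. exact (is_RInt_scal f a b k l H). Qed.

Lemma fcos_f0 m n : fcos f0 m n = - (Sb (2*PI*IZR n) * Sb (2*PI*IZR m)).
Proof.
  unfold fcos. apply is_RInt_unique.
  set (b := 2*PI*IZR n). set (c := 2*PI*IZR m).
  apply is_RInt_ext with (fun x => (- Sb b) * (sgn x * sin (0 + c * x))).
  { intros x _. symmetry. apply is_RInt_unique.
    replace (- Sb b * (sgn x * sin (0 + c * x))) with (sgn x * (- sin (c * x) * Sb b)) by (rewrite Rplus_0_l; toR; ring).
    apply is_RInt_ext with (fun y => sgn x * (sgn y * cos (c * x + b * y))).
    { intros y _. unfold f0, phase.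
      replace (2 * PI * (IZR m * x + IZR n * y)) with (c * x + b * y) by (unfold b, c; toR; ring). toR; ring. }
    apply is_RInt_scal_R. apply is_RInt_sgn_cos. }
  replace (- (Sb b * Sb c)) with (- Sb b * (cos 0 * Sb c)) by (rewrite cos_0; toR; ring).
  apply is_RInt_scal_R. apply is_RInt_sgn_sin.
Qed.

Lemma fsin_f0 m n : fsin f0 m n = 0.
Proof.
  unfold fsin. apply is_RInt_unique.
  set (b := 2*PI*IZR n). set (c := 2*PI*IZR m).
  apply is_RInt_ext with (fun x => (Sb b) * (sgn x * cos (0 + c * x))).
  { intros x _. symmetry. apply is_RInt_unique.
    replace (Sb b * (sgn x * cos (0 + c * x))) with (sgn x * (cos (c * x) * Sb b)) by (rewrite Rplus_0_l; toR; ring).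
    apply is_RInt_ext with (fun y => sgn x * (sgn y * sin (c * x + b * y))).
    { intros y _. unfold f0, phase.
      replace (2 * PI * (IZR m * x + IZR n * y)) with (c * x + b * y) by (unfold b, c; toR; ring). toR; ring. }
    apply is_RInt_scal_R. apply is_RInt_sgn_sin. }
  assert (H := is_RInt_scal_R _ _ _ (Sb b) _ (is_RInt_sgn_cos 0 c)).
  rewrite sin_0 in H. replace (Sb b * (- 0 * Sb c)) with 0 in H by (toR; ring). exact H.
Qed.


Lemma Sb_0 : Sb 0 = 0.
Proof. unfold Sb. destruct (Req_EM_T 0 0); [reflexivity | lra]. Qed.

Lemma Sb_opp b : Sb (- b) = - Sb b.
Proof.
  unfold Sb. destruct (Req_EM_T (-b) 0), (Req_EM_T b 0); try lra.
  replace (- b / 2) with (- (b/2)) by (toR; field). rewrite cos_neg.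
  set (u := cos (b/2)). toR. field. auto.
Qed.

Lemma sym_sum (g : R -> R) N :
  sum_f_R0 (fun i => g (INR i - INR N)) (2 * N) = sum_n (fun k => g (INR k) + g (- INR k)) N - g 0.
Proof.
  induction N.
  - simpl. rewrite sum_n_0. simpl. rewrite Ropp_0, Rminus_0_r. toR; ring.
  - replace (2 * S N)%nat with (S (S (2 * N))) by lia.
    rewrite tech5, decomp_sum by lia. rewrite Nat.pred_succ.
    rewrite (sum_eq _ (fun i => g (INR i - INR N))).
    2:{ intros i _. f_equal. rewrite !S_INR. toR; ring. }
    rewrite IHN, sum_n_S.
    replace (INR (S (S (2 * N))) - INR (S N)) with (INR (S N)) by (rewrite !S_INR, mult_INR; simpl; toR; ring).
    replace (INR 0 - INR (S N)) with (- INR (S N)) by (simpl; toR; ring).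
    toR; ring.
Qed.

Section Partial.
Variables x y : R.

Definition Tr (p q : R) := Sb (2*PI*q) * Sb (2*PI*p) * cos (2*PI*(p*x+q*y)) * / (4*PI^2*(p^2+q^2)).

Lemma term_eq m n : invlap_term f0 m n x y = Tr (IZR m) (IZR n).
Proof.
  unfold invlap_term, Tr. destruct (Z.eqb m 0 && Z.eqb n 0)%bool eqn:E.
  - apply andb_prop in E. destruct E as [E1 E2]. apply Z.eqb_eq in E1, E2. subst.
    rewrite Rmult_0_r, Sb_0. toR; ring.
  - rewrite fcos_f0, fsin_f0. unfold phase, Rdiv.
    set (iD := / (4 * PI ^ 2 * (IZR m ^ 2 + IZR n ^ 2))). toR; ring.
Qed.

Lemma Tr_0l q : Tr 0 q = 0.
Proof. unfold Tr. rewrite Rmult_0_r, Sb_0. toR; ring. Qed.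
Lemma Tr_0r p : Tr p 0 = 0.
Proof. unfold Tr. rewrite Rmult_0_r, Sb_0. toR; ring. Qed.

Definition Aij (i j : nat) := Sb (2*PI*INR i) * Sb (2*PI*INR j) * sin (2*PI*INR i*x) * sin (2*PI*INR j*y)
   * / (PI^2 * (INR i^2 + INR j^2)).

Lemma Tr4 p q : Tr p q + Tr p (-q) + (Tr (-p) q + Tr (-p) (-q)) =
  - (Sb (2*PI*p) * Sb (2*PI*q) * sin (2*PI*p*x) * sin (2*PI*q*y) * / (PI^2 * (p^2 + q^2))).
Proof.
  unfold Tr.
  replace (2 * PI * - q) with (- (2*PI*q)) by (toR; ring).
  replace (2 * PI * - p) with (- (2*PI*p)) by (toR; ring).
  rewrite !Sb_opp.
  replace ((- p)^2) with (p^2) by (toR; ring). replace ((- q)^2) with (q^2) by (toR; ring).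
  replace (2 * PI * (p * x + q * y)) with (2*PI*p*x + 2*PI*q*y) by (toR; ring).
  replace (2 * PI * (p * x + - q * y)) with (2*PI*p*x - 2*PI*q*y) by (toR; ring).
  replace (2 * PI * (- p * x + q * y)) with (- (2*PI*p*x - 2*PI*q*y)) by (toR; ring).
  replace (2 * PI * (- p * x + - q * y)) with (- (2*PI*p*x + 2*PI*q*y)) by (toR; ring).
  rewrite !cos_neg, cos_plus, cos_minus.
  replace (/ (PI ^ 2 * (p ^ 2 + q ^ 2))) with (4 * / (4 * PI ^ 2 * (p ^ 2 + q ^ 2))).
  2:{ destruct (Req_dec (p^2+q^2) 0) as [Hz|Hz].
      - rewrite Hz, !Rmult_0_r, Rinv_0. toR; ring.
      - pose proof PI_RGT_0. toR. field. split; auto. apply Rgt_not_eq; nra. }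
  set (iD := / (4 * PI ^ 2 * (p ^ 2 + q ^ 2))).
  set (a1 := Sb (2*PI*p)). set (a2 := Sb (2*PI*q)).
  set (c1 := cos (2*PI*p*x)). set (c2 := cos (2*PI*q*y)).
  set (s1 := sin (2*PI*p*x)). set (s2 := sin (2*PI*q*y)).
  toR; ring.
Qed.

Lemma partial_eq N : invlap_partial f0 N x y = - sum_n (fun i => sum_n (fun j => Aij i j) N) N.
Proof.
  unfold invlap_partial.
  rewrite (sum_eq _ (fun i => sum_f_R0 (fun j => Tr (INR i - INR N) (INR j - INR N)) (2 * N))).
  2:{ intros i _. apply sum_eq. intros j _. rewrite term_eq, !minus_IZR, <- !INR_IZR_INZ. reflexivity. }
  rewrite (sum_eq _ (fun i => sum_n (fun k => Tr (INR i - INR N) (INR k) + Tr (INR i - INR N) (- INR k)) N)).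
  2:{ intros i _. rewrite (sym_sum (fun q => Tr (INR i - INR N) q)). rewrite Tr_0r. toR; ring. }
  rewrite (sym_sum (fun p => sum_n (fun k => Tr p (INR k) + Tr p (- INR k)) N)).
  rewrite (sum_n_extR (fun k => Tr 0 (INR k) + Tr 0 (- INR k)) (fun k => 0 * 1)).
  2:{ intro; rewrite !Tr_0l. toR; ring. }
  rewrite sum_n_scal, Rmult_0_l, Rminus_0_r.
  rewrite <- sum_n_opp. apply sum_n_extR. intro i.
  rewrite <- sum_n_add, <- sum_n_opp. apply sum_n_extR. intro j.
  rewrite Tr4. unfold Aij. reflexivity.
Qed.

End Partial.


Lemma sum_n_abs (c : nat -> R) N : Rabs (sum_n c N) <= sum_n (fun k => Rabs (c k)) N.
Proof.
  induction N.
  - rewrite !sum_n_0. lra.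
  - rewrite !sum_n_S. eapply Rle_trans. apply Rabs_triang. lra.
Qed.

Lemma sum_n_le (c d : nat -> R) N : (forall k, c k <= d k) -> sum_n c N <= sum_n d N.
Proof.
  intro H. induction N.
  - rewrite !sum_n_0. auto.
  - rewrite !sum_n_S. specialize (H (S N)). lra.
Qed.

Lemma tail_nonneg (b : nat -> R) N : (forall i, 0 <= b i) -> ex_series b -> 0 <= Series b - sum_n b N.
Proof.
  intros Hb Hex. rewrite (Series_incr_n b (S N)) by (lia || auto). simpl pred. rewrite <- sum_n_Reals.
  replace (sum_n b N + Series (fun k : nat => b (S N + k)%nat) - sum_n b N) with
    (Series (fun k : nat => b (S N + k)%nat)) by (toR; ring).
  rewrite <- (Series_zero (fun _ => 0)) by auto.
  apply Series_le. intro; split; [lra | auto]. apply ex_series_incr_n. auto.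
Qed.

Lemma double_lim (a : nat -> nat -> R) (b : nat -> R) :
  (forall i, 0 <= b i) -> (forall i j, Rabs (a i j) <= b i * b j) -> ex_series b ->
  is_lim_seq (fun N => sum_n (fun i => sum_n (fun j => a i j) N) N) (Series (fun i => Series (fun j => a i j))).
Proof.
  intros Hb Hab Hex.
  set (B := Series b). set (F := fun i => Series (fun j => a i j)).
  assert (HB0 : 0 <= B) by (pose proof (tail_nonneg b 0 Hb Hex); rewrite sum_n_0 in H; pose proof (Hb 0%nat); unfold B; lra).
  assert (Hexs : forall i, ex_series (fun j => b i * b j)).
  { intro i. apply (@ex_series_scal_l R_AbsRing R_CompleteNormedModule). auto. }
  assert (HF : forall i N, Rabs (F i - sum_n (fun j => a i j) N) <= b i * (B - sum_n b N)).
  { intros i N. unfold F. eapply Rle_trans. apply (tail_bound (fun j => a i j) (fun j => b i * b j)); auto.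
    rewrite Series_scal_l, sum_n_scal. unfold B. apply Req_le; ring. }
  assert (HFb : forall i, Rabs (F i) <= b i * B).
  { intro i. pose proof (HF i 0%nat). rewrite !sum_n_0 in H.
    pose proof (Hab i 0%nat). pose proof (tail_nonneg b 0 Hb Hex). rewrite sum_n_0 in H1.
    replace (F i) with ((F i - a i 0%nat) + a i 0%nat) by (toR; ring).
    eapply Rle_trans. apply Rabs_triang. pose proof (Hb i). pose proof (Hb 0%nat).
    replace (b i * B) with (b i * (B - b 0%nat) + b i * b 0%nat) by (toR; ring). lra. }
  assert (HexF : ex_series F).
  { apply ex_series_le_R with (fun i => B * b i). intro i. rewrite Rmult_comm. apply HFb.
    apply (@ex_series_scal_l R_AbsRing R_CompleteNormedModule). auto. }
  assert (Herr : forall N, Rabs (sum_n F N - sum_n (fun i => sum_n (fun j => a i j) N) N) <= (B - sum_n b N) * B).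
  { intro N. rewrite <- sum_n_sub. eapply Rle_trans. apply sum_n_abs.
    eapply Rle_trans. apply (sum_n_le _ (fun i => (B - sum_n b N) * b i)).
    intro i. rewrite Rmult_comm. apply HF.
    rewrite sum_n_scal. apply Rmult_le_compat_l. apply tail_nonneg; auto.
    pose proof (tail_nonneg b N Hb Hex). fold B in H. lra. }
  apply is_lim_seq_le_le with (u := fun N => sum_n F N - (B - sum_n b N) * B)
                              (w := fun N => sum_n F N + (B - sum_n b N) * B).
  - intro N. specialize (Herr N). apply Rabs_le_between in Herr. lra.
  - replace (Series F) with (Series F - 0 * B) by (toR; ring).
    apply is_lim_seq_minus'. apply is_series_lim, Series_correct, HexF.
    apply is_lim_seq_mult'. apply tail_lim; auto. apply is_lim_seq_const.
  - replace (Series F) with (Series F + 0 * B) by (toR; ring).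
    apply is_lim_seq_plus'. apply is_series_lim, Series_correct, HexF.
    apply is_lim_seq_mult'. apply tail_lim; auto. apply is_lim_seq_const.
Qed.


Lemma PI_gt3 : 3 < PI.
Proof. pose proof PI2_3_2. lra. Qed.

Lemma Sb_INR i : Sb (2 * PI * INR i) = if Nat.eq_dec i 0 then 0 else 2 * (1 - cos (INR i * PI)) / (2 * PI * INR i).
Proof.
  unfold Sb. pose proof PI_RGT_0. destruct (Nat.eq_dec i 0) as [->|Hi].
  - simpl. rewrite Rmult_0_r. destruct (Req_EM_T 0 0); lra.
  - assert (0 < INR i) by (apply lt_0_INR; lia).
    destruct (Req_EM_T (2 * PI * INR i) 0). nra.
    replace (2 * PI * INR i / 2) with (INR i * PI) by (toR; field). reflexivity.
Qed.

Lemma Sb_even k : Sb (2 * PI * INR (2 * k)) = 0.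
Proof.
  rewrite Sb_INR. destruct (Nat.eq_dec (2*k) 0); [reflexivity|].
  replace (INR (2 * k) * PI) with (0 + 2 * INR k * PI) by (rewrite mult_INR; simpl; toR; ring).
  rewrite cos_period, cos_0. unfold Rdiv. toR; ring.
Qed.

Lemma Sb_odd k : Sb (2 * PI * INR (2 * k + 1)) = 2 / (PI * od k).
Proof.
  rewrite Sb_INR. destruct (Nat.eq_dec (2*k+1) 0); [lia|].
  rewrite <- od_INR, cos_od_PI. pose proof PI_RGT_0. pose proof (od_ge1 k). toR. field. lra.
Qed.

Lemma Sb_bound i : (1 <= i)%nat -> Rabs (Sb (2 * PI * INR i)) <= / INR i.
Proof.
  intro Hi. rewrite Sb_INR. destruct (Nat.eq_dec i 0); [lia|].
  assert (HI : 1 <= INR i) by (apply (le_INR 1); lia).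
  pose proof PI_gt3.
  assert (Hc : Rabs (1 - cos (INR i * PI)) <= 2) by (pose proof (COS_bound (INR i * PI)); apply Rabs_le; lra).
  unfold Rdiv. rewrite Rabs_mult, Rabs_mult, Rabs_Rinv by (apply Rgt_not_eq; nra).
  rewrite (Rabs_pos_eq 2) by lra. rewrite (Rabs_pos_eq (2 * PI * INR i)) by nra.
  replace (/ INR i) with (2 * 2 * / (2 * PI * INR i) * (PI / 2)) by (toR; field; lra).
  assert (0 < / (2 * PI * INR i)) by (apply Rinv_0_lt_compat; nra).
  assert (Rabs (1 - cos (INR i * PI)) * / (2 * PI * INR i) <= 2 * / (2 * PI * INR i)) by nra.
  nra.
Qed.

Definition bb (i : nat) := 3 * Mser i.

Lemma bb_pos i : 0 <= bb i.
Proof. unfold bb, Mser. pose proof (pos_INR i). apply Rmult_le_pos; [lra|]. apply Rlt_le. unfold Rdiv. apply Rmult_lt_0_compat; [lra|]. apply Rinv_0_lt_compat. nra. Qed.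

Lemma inv_sq_bb i : (1 <= i)%nat -> / (INR i ^ 2) <= bb i.
Proof.
  intro Hi. assert (HI : 1 <= INR i) by (apply (le_INR 1); lia).
  unfold bb, Mser. replace (3 * (2 / ((INR i + 1) * (INR i + 2)))) with (/ (((INR i + 1) * (INR i + 2)) / 6)) by (toR; field; nra).
  apply Rinv_le_contravar. nra. nra.
Qed.

Lemma bb_ex : ex_series bb.
Proof. apply (@ex_series_scal_l R_AbsRing R_CompleteNormedModule). apply Mser_ex. Qed.

Lemma Aij_bound x y i j : Rabs (Aij x y i j) <= bb i * bb j.
Proof.
  pose proof (bb_pos i). pose proof (bb_pos j).
  destruct (Nat.eq_dec i 0) as [->|Hi].
  { unfold Aij. simpl. rewrite Rmult_0_r, Sb_0, !Rmult_0_l, Rabs_R0. nra. }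
  destruct (Nat.eq_dec j 0) as [->|Hj].
  { unfold Aij. simpl. rewrite Rmult_0_r, Sb_0, Rmult_0_r, !Rmult_0_l, Rabs_R0. nra. }
  assert (HI : 1 <= INR i) by (apply (le_INR 1); lia).
  assert (HJ : 1 <= INR j) by (apply (le_INR 1); lia).
  pose proof PI_gt3.
  assert (HS1 := Sb_bound i ltac:(lia)). assert (HS2 := Sb_bound j ltac:(lia)).
  assert (Hs1 : Rabs (sin (2 * PI * INR i * x)) <= 1) by (apply Rabs_le; apply SIN_bound).
  assert (Hs2 : Rabs (sin (2 * PI * INR j * y)) <= 1) by (apply Rabs_le; apply SIN_bound).
  assert (HP2 : 0 < PI^2) by (apply pow_lt; lra).
  assert (HIJ : 0 < INR i^2 + INR j^2) by nra.
  assert (HPIJ : 0 < PI ^ 2 * (INR i ^ 2 + INR j ^ 2)) by (apply Rmult_lt_0_compat; auto).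
  unfold Aij. rewrite !Rabs_mult.
  rewrite (Rabs_pos_eq (/ (PI ^ 2 * (INR i ^ 2 + INR j ^ 2)))) by (apply Rlt_le, Rinv_0_lt_compat; nra).
  assert (Hd : / (PI ^ 2 * (INR i ^ 2 + INR j ^ 2)) <= / (INR i * INR j)).
  { apply Rinv_le_contravar. nra. assert (INR i * INR j <= INR i ^ 2 + INR j ^ 2) by nra.
    assert (1 * (INR i ^ 2 + INR j ^ 2) <= PI^2 * (INR i ^ 2 + INR j ^ 2)) by (apply Rmult_le_compat_r; nra). lra. }
  assert (Hk : / INR i * / INR j * / (INR i * INR j) = / (INR i ^ 2) * / (INR j ^ 2)) by (toR; field; lra).
  pose proof (inv_sq_bb i ltac:(lia)). pose proof (inv_sq_bb j ltac:(lia)).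
  assert (0 <= / INR i) by (apply Rlt_le, Rinv_0_lt_compat; lra).
  assert (0 <= / INR j) by (apply Rlt_le, Rinv_0_lt_compat; lra).
  assert (0 <= / (INR i ^ 2)) by (apply Rlt_le, Rinv_0_lt_compat; nra).
  assert (0 <= / (INR j ^ 2)) by (apply Rlt_le, Rinv_0_lt_compat; nra).
  assert (0 <= / (PI ^ 2 * (INR i ^ 2 + INR j ^ 2))) by (apply Rlt_le, Rinv_0_lt_compat; nra).
  set (a1 := Rabs (Sb (2 * PI * INR i))) in *. set (a2 := Rabs (Sb (2 * PI * INR j))) in *.
  set (s1 := Rabs (sin (2 * PI * INR i * x))) in *. set (s2 := Rabs (sin (2 * PI * INR j * y))) in *.
  set (d := / (PI ^ 2 * (INR i ^ 2 + INR j ^ 2))) in *.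
  assert (0 <= a1) by apply Rabs_pos. assert (0 <= a2) by apply Rabs_pos.
  assert (0 <= s1) by apply Rabs_pos. assert (0 <= s2) by apply Rabs_pos.
  apply Rle_trans with (/ INR i * / INR j * 1 * 1 * / (INR i * INR j)).
  - apply Rmult_le_compat; [repeat apply Rmult_le_pos; auto | auto | | auto].
    apply Rmult_le_compat; [repeat apply Rmult_le_pos; auto | auto | | auto].
    apply Rmult_le_compat; [repeat apply Rmult_le_pos; auto | auto | | auto].
    apply Rmult_le_compat; auto.
  - rewrite !Rmult_1_r, Hk. apply Rmult_le_compat; auto.
Qed.

Lemma psi0_double x y : psi0 x y = - Series (fun i => Series (fun j => Aij x y i j)).
Proof.
  unfold psi0, invlap.
  rewrite (Lim_seq_ext _ (fun N => - sum_n (fun i => sum_n (fun j => Aij x y i j) N) N)).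
  2:{ intro N. apply partial_eq. }
  rewrite (is_lim_seq_unique _ (- Series (fun i => Series (fun j => Aij x y i j)))). reflexivity.
  apply (is_lim_seq_opp (fun N => sum_n (fun i => sum_n (fun j => Aij x y i j) N) N) (Series (fun i => Series (fun j => Aij x y i j)))).
  apply double_lim with bb. apply bb_pos. apply Aij_bound. apply bb_ex.
Qed.


Lemma sum_n_odd (c : nat -> R) K : (forall k, c (2*k)%nat = 0) ->
  sum_n c (2*K+1) = sum_n (fun k => c (2*k+1)%nat) K.
Proof.
  intro H. induction K.
  - rewrite Nat.mul_0_r, Nat.add_0_l. rewrite sum_n_S, !sum_n_0. specialize (H 0%nat).
    rewrite Nat.mul_0_r in H. rewrite H. rewrite Nat.mul_0_r, Nat.add_0_l. toR; ring.
  - replace (2 * S K + 1)%nat with (S (S (2 * K + 1))) by lia.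
    rewrite !sum_n_S, IHK. replace (S (2 * K + 1)) with (2 * S K)%nat by lia.
    rewrite H. replace (S (2 * S K)) with (2 * S K + 1)%nat by lia. toR; ring.
Qed.

Lemma is_series_odd (c : nat -> R) L : (forall k, c (2*k)%nat = 0) ->
  (is_series c L <-> is_series (fun k => c (2*k+1)%nat) L).
Proof.
  intro H. rewrite !is_series_lim, !is_lim_seq_Reals. split.
  - intros Hc eps Heps. destruct (Hc eps Heps) as [N HN]. exists N. intros n Hn.
    rewrite <- sum_n_odd by auto. apply HN. lia.
  - intros Hc eps Heps. destruct (Hc eps Heps) as [N HN]. exists (2 * N + 1)%nat. intros n Hn.
    destruct (Nat.Even_or_Odd n) as [[p Hp]|[p Hp]]; subst n.
    + destruct p. lia.
      replace (2 * S p)%nat with (S (2 * p + 1)) by lia. rewrite sum_n_S.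
      replace (S (2 * p + 1)) with (2 * S p)%nat by lia. rewrite H, Rplus_0_r.
      rewrite sum_n_odd by auto. apply HN. lia.
    + rewrite sum_n_odd by auto. apply HN. lia.
Qed.

Definition Ec (m t : R) := PI / (4 * m^2) * (1 - ch (m * (t - PI/2)) / ch (m * PI / 2)).

Lemma od_pos k : 0 < od k.
Proof. pose proof (od_ge1 k). lra. Qed.

Lemma inner_series x y k : 0 <= 2 * PI * y <= PI ->
  is_series (fun j => Aij x y (2*k+1) j)
    (Sb (2*PI*INR (2*k+1)) * sin (2*PI*INR (2*k+1)*x) * (2 / PI^3) * Ec (od k) (2*PI*y)).
Proof.
  intro Hy. apply is_series_odd.
  { intro j. unfold Aij. rewrite Sb_even. toR; ring. }
  unfold Ec. rewrite <- (E_closed (od k) (od_pos k)) by auto.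
  unfold SinS.
  apply is_series_ext with (fun l => (Sb (2*PI*INR (2*k+1)) * sin (2*PI*INR (2*k+1)*x) * (2 / PI^3)) *
                                     (sin (od l * (2 * PI * y)) * cE (od k) l)).
  - intro l. unfold Aij, cE. rewrite (Sb_odd l). rewrite <- !od_INR.
    pose proof (od_pos l). pose proof (od_pos k). pose proof PI_RGT_0.
    replace (2 * PI * od l * y) with (od l * (2 * PI * y)) by (toR; ring).
    set (A := Sb (2 * PI * od k)). set (s1 := sin (2 * PI * od k * x)). set (s2 := sin (od l * (2 * PI * y))).
    toR. field. repeat split; apply Rgt_not_eq; nra.
  - apply (is_series_scal (Sb (2*PI*INR (2*k+1)) * sin (2*PI*INR (2*k+1)*x) * (2 / PI^3))
             (fun l => sin (od l * (2 * PI * y)) * cE (od k) l)).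
    apply Series_correct. apply SinS_ex. apply cbound_E. apply od_pos.
Qed.

Lemma ex_series_scal_R (c : R) (a : nat -> R) : ex_series a -> ex_series (fun n => c * a n).
Proof. apply (@ex_series_scal_l R_AbsRing R_CompleteNormedModule). Qed.
Lemma ex_series_scal_R' (c : R) (a : nat -> R) : ex_series a -> ex_series (fun n => a n * c).
Proof. intro H. apply ex_series_ext with (fun n => c * a n). intro; apply Rmult_comm. now apply ex_series_scal_R. Qed.

Lemma outer_ex x y : ex_series (fun i => Series (fun j => Aij x y i j)).
Proof.
  apply ex_series_le_R with (fun i => Series bb * bb i).
  - intro i. eapply Rle_trans. apply Series_Rabs.
    apply ex_series_le_R with (fun j => bb i * bb j). intro j. rewrite Rabs_Rabsolu. apply Aij_bound.
    apply ex_series_scal_R. apply bb_ex.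
    rewrite <- Series_scal_r. apply Series_le. intro j. split. apply Rabs_pos.
    rewrite Rmult_comm. apply Aij_bound.
    apply ex_series_scal_R'. apply bb_ex.
  - apply ex_series_scal_R. apply bb_ex.
Qed.

Lemma psi0_odd x y : 0 <= y <= 1/2 ->
  is_series (fun k => 4 / (PI^4 * od k) * sin (od k * (2*PI*x)) * Ec (od k) (2*PI*y)) (- psi0 x y).
Proof.
  intro Hy. pose proof PI_RGT_0.
  assert (Hy' : 0 <= 2 * PI * y <= PI) by nra.
  rewrite psi0_double, Ropp_involutive.
  set (F := fun i => Series (fun j => Aij x y i j)).
  assert (HF := Series_correct F (outer_ex x y)).
  apply (is_series_odd F) in HF.
  - apply is_series_ext with (fun k => F (2*k+1)%nat); auto.
    intro k. unfold F. rewrite (is_series_unique _ _ (inner_series x y k Hy')).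
    rewrite Sb_odd, <- od_INR. pose proof (od_pos k).
    replace (2 * PI * od k * x) with (od k * (2 * PI * x)) by (toR; ring).
    set (s := sin (od k * (2 * PI * x))). set (e := Ec (od k) (2 * PI * y)).
    toR. field. split; apply Rgt_not_eq; nra.
  - intro k. unfold F. apply Series_zero. intro j. unfold Aij. rewrite Sb_even. toR; ring.
Qed.


Lemma exp_ge1 x : 1 + x <= exp x.
Proof. apply exp_ineq1_le. Qed.

Lemma exp_le x y : x <= y -> exp x <= exp y.
Proof. intro H. destruct (Req_dec x y) as [->|]; [lra|]. apply Rlt_le, exp_increasing. lra. Qed.

Lemma sh_add z v : sh (z + v) = sh z * ch v + ch z * sh v.
Proof.
  unfold sh, ch. rewrite Ropp_plus_distr, !exp_plus.
  set (a := exp z). set (b := exp v). set (c := exp (-z)). set (d := exp (-v)). toR. field.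
Qed.

Lemma ch_le_sh z : 0 < z -> ch z <= sh z * (1 + / z).
Proof.
  intro Hz. unfold sh, ch.
  assert (E : exp (- z) * exp z = 1) by (rewrite <- exp_plus; replace (-z + z) with 0 by ring; apply exp_0).
  assert (H2 : 1 + 2 * z <= exp z * exp z) by (rewrite <- exp_plus; replace (z + z) with (2 * z) by ring; apply exp_ge1).
  pose proof (exp_pos z). pose proof (exp_pos (-z)).
  set (a := exp z) in *. set (c := exp (-z)) in *.
  replace ((a - c) / 2 * (1 + / z)) with ((a - c) * (z + 1) / (2 * z)) by (toR; field; lra).
  apply Rmult_le_reg_r with (2 * z). lra.
  replace ((a + c) / 2 * (2 * z)) with ((a + c) * z) by (toR; field).
  replace ((a - c) * (z + 1) / (2 * z) * (2 * z)) with ((a - c) * (z + 1)) by (toR; field; lra).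
  (* (a+c) z <= (a-c)(z+1)  <=> c (2z+1) <= a ;  multiply by a: c a = 1 *)
  apply Rmult_le_reg_r with a. lra. nra.
Qed.

Lemma sh_le v : 0 <= v -> sh v <= v * exp v.
Proof.
  intro Hv. unfold sh.
  assert (E : exp (- v) * exp v = 1) by (rewrite <- exp_plus; replace (-v + v) with 0 by ring; apply exp_0).
  assert (H2 : 1 + (- 2 * v) <= exp (-v) * exp (-v)) by (rewrite <- exp_plus; replace (-v + -v) with (-2 * v) by ring; apply exp_ge1).
  pose proof (exp_pos v). pose proof (exp_pos (-v)).
  set (a := exp v) in *. set (c := exp (-v)) in *.
  apply Rmult_le_reg_r with (2 * a). lra.
  replace ((a - c) / 2 * (2 * a)) with (a * a - c * a) by (toR; field).
  rewrite E.
  (* a^2 - 1 <= 2 v a^2  <=> 1 - 2v <= 1/a^2 = c^2 *)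
  assert (a * a * (c * c) = 1) by (replace (a * a * (c * c)) with ((c * a) * (c * a)) by ring; rewrite E; ring).
  nra.
Qed.

Lemma sh_nonneg z : 0 <= z -> 0 <= sh z.
Proof. intro. destruct (Req_dec z 0) as [->|]. rewrite sh_0; lra. apply Rlt_le, sh_pos. lra. Qed.

Lemma sh_ratio m u : 1 <= m -> 0 < u -> sh ((m + 2) * u) <= sh (m * u) * exp (2 * u) * ((m + 2) / m).
Proof.
  intros Hm Hu.
  replace ((m + 2) * u) with (m * u + 2 * u) by ring.
  rewrite sh_add.
  assert (Hz : 0 < m * u) by nra.
  pose proof (ch_le_sh (m * u) Hz) as H1.
  pose proof (sh_le (2 * u) ltac:(lra)) as H2.
  pose proof (sh_pos (m * u) Hz). pose proof (sh_pos (2 * u) ltac:(lra)).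
  assert (Hcs : ch (2 * u) + sh (2 * u) = exp (2 * u)).
  { unfold ch, sh. toR. field. }
  set (S := sh (m * u)) in *. set (C := ch (m * u)) in *. set (s := sh (2 * u)) in *.
  set (c := ch (2 * u)) in *. set (E := exp (2 * u)) in *.
  apply Rle_trans with (S * c + S * (1 + / (m * u)) * s).
  { apply Rplus_le_compat_l. apply Rmult_le_compat_r; lra. }
  replace (S * c + S * (1 + / (m * u)) * s) with (S * (c + s) + S * s / (m * u)) by (toR; field; lra).
  rewrite Hcs.
  replace (S * E * ((m + 2) / m)) with (S * E + S * (2 * u * E) / (m * u)) by (toR; field; lra).
  apply Rplus_le_compat_l. unfold Rdiv. apply Rmult_le_compat_r.
  apply Rlt_le, Rinv_0_lt_compat; lra. apply Rmult_le_compat_l; lra.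
Qed.

Lemma key_H2 m u : 1 <= m -> 0 <= u <= PI/2 -> m * exp (2 * u) * ch (m * PI / 2) <= (m + 2) * ch ((m + 2) * PI / 2).
Proof.
  intros Hm Hu. pose proof PI_RGT_0.
  assert (He : exp (2 * u) <= exp PI) by (apply exp_le; lra).
  pose proof (ch_pos (m * PI / 2)).
  apply Rle_trans with (m * exp PI * ch (m * PI / 2)).
  { apply Rmult_le_compat_r; [lra|]. apply Rmult_le_compat_l; lra. }
  unfold ch.
  assert (E1 : exp PI * exp (m * PI / 2) = exp ((m + 2) * PI / 2)) by (rewrite <- exp_plus; f_equal; toR; field).
  assert (E2 : exp PI * exp (- (m * PI / 2)) = exp (PI - m * PI / 2)) by (rewrite <- exp_plus; f_equal; toR; field).
  assert (E3 : exp (PI - m * PI / 2) * exp (m * PI) = exp ((m + 2) * PI / 2)) by (rewrite <- exp_plus; f_equal; toR; field).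
  assert (H4 : 1 + m * PI <= exp (m * PI)) by apply exp_ge1.
  pose proof (exp_pos (PI - m * PI / 2)). pose proof (exp_pos (- ((m + 2) * PI / 2))).
  replace (m * exp PI * ((exp (m * PI / 2) + exp (- (m * PI / 2))) / 2)) with
    (m * (exp PI * exp (m * PI / 2) + exp PI * exp (- (m * PI / 2))) / 2) by (toR; field).
  rewrite E1, E2. rewrite <- E3.
  set (Q := exp (PI - m * PI / 2)) in *. set (X := exp (m * PI)) in *.
  set (Y := exp (- ((m + 2) * PI / 2))) in *.
  assert (Hm2 : m <= 2 * X) by (pose proof PI_gt3; nra).
  assert (m * Q <= 2 * (Q * X)) by nra.
  apply Rmult_le_reg_r with 2. lra.
  replace (m * (Q * X + Q) / 2 * 2) with (m * (Q * X) + m * Q) by (toR; field).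
  replace ((m + 2) * ((Q * X + Y) / 2) * 2) with ((m + 2) * (Q * X) + (m + 2) * Y) by (toR; field).
  nra.
Qed.

Lemma cm_decr m u : 1 <= m -> 0 <= u <= PI/2 ->
  sh ((m + 2) * u) / ((m + 2)^2 * ch ((m + 2) * PI / 2)) <= sh (m * u) / (m^2 * ch (m * PI / 2)).
Proof.
  intros Hm Hu. pose proof (ch_pos ((m + 2) * PI / 2)). pose proof (ch_pos (m * PI / 2)).
  destruct (Req_dec u 0) as [->|Hu0].
  { rewrite !Rmult_0_r, sh_0. unfold Rdiv. rewrite !Rmult_0_l. lra. }
  pose proof (sh_ratio m u Hm ltac:(lra)).
  pose proof (key_H2 m u Hm Hu).
  pose proof (sh_pos (m * u) ltac:(nra)).
  set (A := sh ((m + 2) * u)) in *. set (S := sh (m * u)) in *. set (E := exp (2 * u)) in *.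
  set (C2 := ch ((m + 2) * PI / 2)) in *. set (C0 := ch (m * PI / 2)) in *.
  apply Rle_trans with (S * E * ((m + 2) / m) / ((m + 2) ^ 2 * C2)).
  { unfold Rdiv. apply Rmult_le_compat_r. apply Rlt_le, Rinv_0_lt_compat. nra. exact H1. }
  replace (S * E * ((m + 2) / m) / ((m + 2) ^ 2 * C2)) with (S * (m * E * C0) / (m^2 * (m + 2) * C2 * C0)) by (toR; field; repeat split; lra).
  replace (S / (m ^ 2 * C0)) with (S * ((m + 2) * C2) / (m^2 * (m + 2) * C2 * C0)) by (toR; field; repeat split; lra).
  unfold Rdiv. apply Rmult_le_compat_r. apply Rlt_le, Rinv_0_lt_compat.
  apply Rmult_lt_0_compat; [|lra]. apply Rmult_lt_0_compat; [|lra]. apply Rmult_lt_0_compat; nra.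
  apply Rmult_le_compat_l; lra.
Qed.

Lemma sh_opp z : sh (- z) = - sh z.
Proof. unfold sh. rewrite Ropp_involutive. toR. field. Qed.

Definition cm (m u : R) := sh (m * u) / (m^2 * ch (m * PI / 2)).

Lemma Ec_derive m t : 0 < m -> is_derive (Ec m) t (PI / 4 * m * cm m (PI/2 - t)).
Proof.
  intro Hm. unfold Ec, cm. pose proof (ch_pos (m * PI / 2)).
  replace (m * (PI / 2 - t)) with (- (m * (t - PI/2))) by (toR; field).
  rewrite sh_opp. unfold ch, sh in *.
  auto_derive. repeat split; apply Rgt_not_eq; try nra.
  toR. clear H. gen_exp. field. repeat split; apply Rgt_not_eq; try nra.
Qed.

Lemma cm_nonneg m u : 0 < m -> 0 <= u -> 0 <= cm m u.
Proof.
  intros. unfold cm. pose proof (ch_pos (m * PI / 2)). pose proof (sh_nonneg (m * u) ltac:(nra)).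
  unfold Rdiv. apply Rmult_le_pos; auto. apply Rlt_le, Rinv_0_lt_compat. apply Rmult_lt_0_compat; [apply pow_lt; lra | auto].
Qed.

Lemma is_derive_constR (a x : R) : is_derive (fun _ => a) x 0.
Proof. auto_derive; auto. Qed.

Section W.
Variables phi0 phi : R.
Hypothesis Hp : 0 <= phi0 <= phi /\ phi <= PI/2.

Definition wk (k : nat) := / od k * (Ec (od k) phi - Ec (od k) phi0).

Lemma wk_nonneg k : 0 <= wk k.
Proof.
  unfold wk. pose proof (od_pos k). apply Rmult_le_pos. apply Rlt_le, Rinv_0_lt_compat; lra.
  assert (Ec (od k) phi0 <= Ec (od k) phi); [|lra].
  apply (incr_by_deriv (Ec (od k)) (fun t => PI / 4 * od k * cm (od k) (PI/2 - t))). lra.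
  intros; apply Ec_derive; auto.
  intros c Hc. pose proof PI_RGT_0. pose proof (cm_nonneg (od k) (PI/2 - c) H ltac:(lra)).
  apply Rmult_le_pos; [nra | auto].
Qed.

Lemma wk_decr k : wk (S k) <= wk k.
Proof.
  unfold wk. rewrite od_S. pose proof (od_pos k) as Hk. set (m := od k) in *.
  pose proof PI_RGT_0.
  set (f := fun t => / m * (Ec m t - Ec m phi0) - / (m + 2) * (Ec (m + 2) t - Ec (m + 2) phi0)).
  assert (f phi0 <= f phi); [| unfold f in *; replace (Ec m phi0 - Ec m phi0) with 0 in H0 by ring;
    replace (Ec (m+2) phi0 - Ec (m+2) phi0) with 0 in H0 by ring; lra].
  apply (incr_by_deriv f (fun t => PI / 4 * (cm m (PI/2 - t) - cm (m + 2) (PI/2 - t)))). lra.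
  - intros c Hc. unfold f.
    replace (PI / 4 * (cm m (PI / 2 - c) - cm (m + 2) (PI / 2 - c))) with
      (/ m * (PI / 4 * m * cm m (PI / 2 - c) - 0) - / (m + 2) * (PI / 4 * (m + 2) * cm (m + 2) (PI / 2 - c) - 0))
      by (toR; field; lra).
    apply (is_derive_minus (fun t => / m * (Ec m t - Ec m phi0)) (fun t => / (m + 2) * (Ec (m + 2) t - Ec (m + 2) phi0))).
    + apply (is_derive_scal (fun t => Ec m t - Ec m phi0)).
      apply (is_derive_minus (Ec m) (fun _ => Ec m phi0)). apply Ec_derive; lra. apply is_derive_constR.
    + apply (is_derive_scal (fun t => Ec (m + 2) t - Ec (m + 2) phi0)).
      apply (is_derive_minus (Ec (m + 2)) (fun _ => Ec (m + 2) phi0)). apply Ec_derive; lra. apply is_derive_constR.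
  - intros c Hc. apply Rmult_le_pos. lra.
    assert (cm (m + 2) (PI / 2 - c) <= cm m (PI / 2 - c)); [|lra].
    unfold cm. apply cm_decr. unfold m; apply od_ge1. lra.
Qed.

End W.

Lemma sin_sum_id t K : sin t * sum_n (fun k => sin (od k * t)) K = sin (INR (S K) * t) ^ 2.
Proof.
  induction K.
  - rewrite sum_n_0. unfold od. simpl. replace ((2 * 0 + 1) * t) with t by ring. replace (1 * t) with t by ring. ring.
  - rewrite sum_n_S, Rmult_plus_distr_l, IHK.
    replace (od (S K) * t) with (INR (S (S K)) * t + INR (S K) * t) by (unfold od; rewrite !S_INR; ring).
    replace (sin t) with (sin (INR (S (S K)) * t - INR (S K) * t)) by (f_equal; rewrite !S_INR; ring).
    rewrite sin_plus, sin_minus.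
    pose proof (sin2_cos2 (INR (S (S K)) * t)). pose proof (sin2_cos2 (INR (S K) * t)).
    unfold Rsqr in *.
    set (a := sin (INR (S (S K)) * t)) in *. set (b := sin (INR (S K) * t)) in *.
    set (ca := cos (INR (S (S K)) * t)) in *. set (cb := cos (INR (S K) * t)) in *.
    nra.
Qed.

Lemma sin_sum_nonneg t K : 0 < t < PI -> 0 <= sum_n (fun k => sin (od k * t)) K.
Proof.
  intro Ht. pose proof (sin_pos_open t Ht). pose proof (sin_sum_id t K).
  assert (0 <= sin (INR (S K) * t) ^ 2) by (apply pow2_ge_0). nra.
Qed.

Lemma abel (s w : nat -> R) K :
  sum_n (fun k => s k * w k) K = sum_n (fun k => sum_n s k * (w k - w (S k))) K + sum_n s K * w (S K).
Proof.
  induction K.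
  - rewrite !sum_n_0. toR; ring.
  - rewrite !sum_n_S, IHK. toR; ring.
Qed.

Lemma abel_nonneg (s w : nat -> R) K : (forall k, 0 <= sum_n s k) -> (forall k, 0 <= w k) ->
  (forall k, w (S k) <= w k) -> 0 <= sum_n (fun k => s k * w k) K.
Proof.
  intros Hs Hw Hd. rewrite abel.
  apply Rplus_le_le_0_compat.
  - apply Rle_trans with (sum_n (fun _ => 0) K).
    + rewrite (sum_n_extR (fun _ => 0) (fun _ => 0 * 1)) by (intro; ring). rewrite sum_n_scal. lra.
    + apply sum_n_le. intro k. apply Rmult_le_pos; auto. specialize (Hd k). lra.
  - apply Rmult_le_pos; auto.
Qed.


Lemma is_series_minus_R (a b : nat -> R) la lb : is_series a la -> is_series b lb ->
  is_series (fun n => a n - b n) (la - lb).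
Proof. intros Ha Hb. exact (is_series_minus a b la lb Ha Hb). Qed.

Lemma series_nonneg (a : nat -> R) l : is_series a l -> (forall N, 0 <= sum_n a N) -> 0 <= l.
Proof.
  intros Ha Hp. apply is_series_lim in Ha.
  assert (H := is_lim_seq_le (fun _ => 0) (sum_n a) 0 l Hp (is_lim_seq_const 0) Ha).
  simpl in H. exact H.
Qed.

Lemma psi_mono x y y0 : 0 < x < 1/2 -> 0 <= y0 <= y -> y <= 1/4 -> psi0 x y <= psi0 x y0.
Proof.
  intros Hx Hy Hy4. pose proof PI_RGT_0.
  set (th := 2 * PI * x). set (phi := 2 * PI * y). set (phi0 := 2 * PI * y0).
  assert (Hth : 0 < th < PI) by (unfold th; nra).
  assert (Hp : 0 <= phi0 <= phi /\ phi <= PI/2) by (unfold phi, phi0; nra).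
  assert (H1 := psi0_odd x y ltac:(lra)). assert (H0 := psi0_odd x y0 ltac:(lra)).
  assert (HD := is_series_minus_R _ _ _ _ H1 H0).
  enough (0 <= - psi0 x y - - psi0 x y0) by lra.
  apply (series_nonneg _ _ HD). intro N.
  rewrite (sum_n_extR _ (fun k => 4 / PI^4 * (sin (od k * th) * wk phi0 phi k))).
  - rewrite sum_n_scal. apply Rmult_le_pos.
    + unfold Rdiv. apply Rmult_le_pos. lra. apply Rlt_le, Rinv_0_lt_compat, pow_lt; lra.
    + apply abel_nonneg.
      * intro k. apply sin_sum_nonneg; auto.
      * intro k. apply wk_nonneg; auto.
      * intro k. apply wk_decr; auto.
  - intro k. unfold wk. cbv beta. fold th phi phi0. pose proof (od_pos k).
    set (s := sin (od k * th)). set (e1 := Ec (od k) phi). set (e0 := Ec (od k) phi0).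
    toR. field. repeat split; apply Rgt_not_eq; try lra; try (apply pow_lt; lra).
Qed.

Theorem lemma2p4 (x y : R) :
  0 < y -> y < x -> x < 1/4 -> Rbar_lt eps1 (Finite (psi0 x y)) -> y < 1/2000.
Proof.
  intros Hy Hyx Hx Heps.
  destruct (Rlt_dec y (1/2000)) as [Hlt|Hge]; [exact Hlt|exfalso].
  assert (Hm : psi0 x y <= psi0 x (1/2000)) by (apply psi_mono; lra).
  assert (Hub : Rbar_le (Finite (psi0 x (1/2000))) eps1).
  { unfold eps1. destruct (Lub_Rbar_correct (fun v => exists x, 1/2000 < x < 1/2 /\ v = psi0 x (1/2000))) as [Hu _].
    apply Hu. exists x. split; [lra | reflexivity]. }
  destruct eps1 as [r| |]; simpl in *; lra.
Qed.
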